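(* Let $g_1,\dots,g_r\in\mathbb R[X_1,\dots,X_n]$ satisfy $1-\|\mathbf X\|_2^2\in\mathcal Q(\mathbf g)$ and $\|g_i\|\le\tfrac12$, with $S=\mathcal S(\mathbf g)\neq\emptyset$. Let $f\in\mathbb R[\mathbf X]$ of degree $d$ with $f^*=\min_{x\in S}f(x)>0$, and assume there exists $x\in[-1,1]^n\setminus S$ with $f(x)\le0$. Let $A=\{x\in[-1,1]^n: f(x)\le \tfrac{3f^*}{4}\}$. Then $d_H(A,S)\ge\dfrac{\epsilon(f)}{8d^2}$.
   Context: $\Sigma^2$ sums of squares, $\mathcal S(\mathbf g)=\{x:g_i(x)\ge0\ \forall i\}$, $\mathcal Q(\mathbf g)=\Sigma^2+\sum_i\Sigma^2g_i$, $\|h\|=\max_{[-1,1]^n}|h|$, $\|\mathbf X\|_2^2=\sum X_i^2$, $\epsilon(f)=f^*/\|f\|$. $d_H(A,B)=\max\{\sup_{a\in A}\operatorname{dist}(a,B),\sup_{b\in B}\operatorname{dist}(b,A)\}$ is the Hausdorff distance (Euclidean). *)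

(* Defs.v *)
From HB Require Import structures.
From mathcomp Require Import all_boot all_order all_algebra.
From mathcomp Require Import mpoly.
From mathcomp Require Import all_classical all_reals.
Set Implicit Arguments. Unset Strict Implicit. Unset Printing Implicit Defensive.
Import Order.TTheory GRing.Theory Num.Theory.
Local Open Scope ring_scope.
Local Open Scope classical_set_scope.

Section Defs.
Context {R : realType} {n : nat}.

Definition poly_n := mpoly n R.
Definition point := 'I_n -> R.

Definition ev (p : poly_n) (x : point) : R := meval x p.

(* total degree of p (0 for the zero polynomial) *)
Definition tdeg (p : poly_n) : nat := (\max_(m <- msupp p) mdeg m)%N.

Definition sos (p : poly_n) : Prop :=
  exists s : seq poly_n, p = \sum_(q <- s) q ^+ 2.

Definition quadmod (r : nat) (g : 'I_r -> poly_n) (p : poly_n) : Prop :=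
  exists (s0 : poly_n) (s : 'I_r -> poly_n),
    sos s0 /\ (forall i, sos (s i)) /\ p = s0 + \sum_(i < r) s i * g i.

Definition semialg (r : nat) (g : 'I_r -> poly_n) : set point :=
  [set x | forall i, 0 <= ev (g i) x].

Definition cube : set point := [set x | forall i, -1 <= x i <= 1].

Definition supnorm (h : poly_n) : R := sup [set `|ev h x| | x in cube].

Definition one_minus_sqnorm : poly_n :=
  1 - \sum_(i < n) (mpolyX R (mnm1 i)) ^+ 2.

(* f^* = min over S of f (taken as infimum; S is compact here) *)
Definition fmin (f : poly_n) (S : set point) : R := inf [set ev f x | x in S].

Definition eps (f : poly_n) (S : set point) : R := fmin f S / supnorm f.

Definition edist (x y : point) : R := Num.sqrt (\sum_(i < n) (x i - y i) ^+ 2).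

Definition dist_set (a : point) (B : set point) : R := inf [set edist a b | b in B].

Definition hausdorff (A B : set point) : R :=
  Num.max (sup [set dist_set a B | a in A]) (sup [set dist_set b A | b in B]).

End Defs.

(* Main.v *)
Require Import Defs.
From HB Require Import structures.
From mathcomp Require Import all_boot all_order all_algebra.
From mathcomp Require Import mpoly.
From mathcomp Require Import all_classical all_reals.
From mathcomp Require Import trigo.
From mathcomp Require Import polyrcf qpoly.
From mathcomp Require Import ring lra zify.
Import Order.TTheory GRing.Theory Num.Theory.
Local Open Scope ring_scope.
Section Markov.
Variable R : realType.

Fixpoint cheb2 (k : nat) : {poly R} * {poly R} :=
  match k with
  | 0%N => (1, 'X)
  | k'.+1 => ((cheb2 k').2, 2%:P * 'X * (cheb2 k').2 - (cheb2 k').1)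
  end.
Definition cheb k := (cheb2 k).1.

Lemma chebSS k : cheb k.+2 = 2%:P * 'X * cheb k.+1 - cheb k.
Proof. by []. Qed.
Lemma cheb0 : cheb 0 = 1. Proof. by []. Qed.
Lemma cheb1 : cheb 1 = 'X. Proof. by []. Qed.

Lemma nat_ind2 (P : nat -> Prop) : P 0%N -> P 1%N ->
  (forall k, P k -> P k.+1 -> P k.+2) -> forall k, P k.
Proof.
move=> h0 h1 hS k; suff : P k /\ P k.+1 by case.
elim: k => [|k [IH1 IH2]]; first by split.
by split => //; apply: hS.
Qed.

Lemma cheb_cos k t : (cheb k).[cos t] = cos (k%:R * t).
Proof.
elim/nat_ind2: k => [||k IH1 IH2]. 
- by rewrite cheb0 hornerC mul0r cos0.
- by rewrite cheb1 hornerX mul1r.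
rewrite chebSS !hornerE IH1 IH2.
have -> : k.+2%:R * t = k.+1%:R * t + t.
  by rewrite -(addn1 k.+1) natrD mulrDl mul1r.
have -> : k%:R * t = k.+1%:R * t - t.
  by rewrite -(addn1 k) natrD mulrDl mul1r addrK.
rewrite !cosD cosN sinN; ring.
Qed.

Lemma size_cheb k : (size (cheb k) <= k.+1)%N.
Proof.
elim/nat_ind2: k => [||k IH1 IH2].
- by rewrite cheb0 size_poly1.
- by rewrite cheb1 size_polyX.
rewrite chebSS.
apply: (leq_trans (size_polyD _ _)); rewrite geq_max size_polyN.
apply/andP; split; last by apply: (leq_trans IH1); lia.
apply: (leq_trans (size_polyMleq _ _)).
have h2 : (size ((2%:P * 'X)%R : {poly R}) <= 2)%N.
  apply: (leq_trans (size_polyMleq _ _)).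
  have := size_polyC_leq1 (2 : R); rewrite size_polyX.
  move: (size (2%:P : {poly R})) => m; lia.
move: h2 IH2; lia.
Qed.

Lemma cheb_at1 k : (cheb k).[1] = 1 /\ (cheb k)^`().[1] = k%:R ^+ 2.
Proof.
elim/nat_ind2: k => [||k [A1 A2] [B1 B2]].
- by rewrite cheb0 hornerC derivC horner0 expr0n.
- by rewrite cheb1 hornerX derivX hornerC expr1n.
rewrite chebSS !derivE !hornerE A1 A2 B1 B2; split; first by ring.
rewrite -(addn1 k.+1) -(addn1 k) !natrD; ring.
Qed.

Lemma cos_natpi k : cos (k%:R * pi) = (-1) ^+ k :> R.
Proof.
elim: k => [|k IH]; first by rewrite mul0r cos0 expr0.
by rewrite -addn1 natrD mulrDl mul1r cosDpi IH exprD expr1 mulrN1.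
Qed.


Definition node (d k : nat) : R :=
  if (k <= d)%N then cos (k%:R * pi / d%:R) else (k.+2)%:R.

Section Nodes.
Variable d : nat.
Hypothesis d_gt0 : (0 < d)%N.

Lemma node_arg k : (k <= d)%N -> (0 : R) <= k%:R * (pi : R) / d%:R <= (pi : R).
Proof.
move=> kd; have pi0 := @pi_gt0 R; have d0 : (0 : R) < d%:R by rewrite ltr0n.
apply/andP; split; first by rewrite divr_ge0 // mulr_ge0 // ltW.
rewrite ler_pdivrMr // mulrC ler_wpM2l ?ler_nat //; exact: ltW.
Qed.

Lemma node_le k : (k <= d)%N -> -1 <= node d k <= 1.
Proof. by move=> kd; rewrite /node kd cos_geN1 cos_le1. Qed.

Lemma node0 : node d 0 = 1.
Proof. by rewrite /node leq0n mul0r mul0r cos0. Qed.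

Lemma node_dec j k : (j < k)%N -> (k <= d)%N -> node d k < node d j.
Proof.
move=> jk kd; have jd : (j <= d)%N by apply: ltnW (leq_trans jk kd).
rewrite /node kd jd ltr_cos ?in_itv /= ?node_arg //.
have pi0 := @pi_gt0 R; have d0 : (0 : R) < d%:R by rewrite ltr0n.
by rewrite ltr_pM2r ?invr_gt0 // ltr_pM2r // ltr_nat.
Qed.

Lemma node_inj : injective (node d).
Proof.
move=> j k; rewrite /node.
case: (leqP j d) => jd; case: (leqP k d) => kd.
- move=> e; case: (ltngtP j k) => [lt|lt|//].
  + by have := node_dec _ _ lt kd; rewrite /node jd kd e ltxx.
  + by have := node_dec _ _ lt jd; rewrite /node jd kd e ltxx.
- move=> e; have := cos_le1 (j%:R * pi / d%:R : R); rewrite e => h.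
  have : (k.+2%:R : R) <= 1%:R := h. rewrite ler_nat; lia.
- move=> e; have := cos_le1 (k%:R * pi / d%:R : R); rewrite -e => h.
  have : (j.+2%:R : R) <= 1%:R := h. rewrite ler_nat; lia.
- by move/eqP; rewrite eqr_nat; move/eqP => [].
Qed.

Lemma cheb_node k : (k <= d)%N -> (cheb d).[node d k] = (-1) ^+ k.
Proof.
move=> kd; rewrite /node kd cheb_cos -cos_natpi; congr cos.
have d0 : (d%:R : R) != 0 by rewrite pnatr_eq0 -lt0n.
by field.
Qed.

End Nodes.


Lemma prod_XsubC_at1 (I : Type) (r : seq I) (P : pred I) (a : I -> R) :
  (forall i, P i -> a i <= 1) ->
  0 <= (\prod_(i <- r | P i) ('X - (a i)%:P)).[1] /\
  0 <= (\prod_(i <- r | P i) ('X - (a i)%:P))^`().[1].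
Proof.
move=> ha.
apply: (big_ind (fun q : {poly R} => 0 <= q.[1] /\ 0 <= q^`().[1])).
- by rewrite hornerC derivC horner0.
- move=> p q [p0 p1] [q0 q1]; rewrite derivM !hornerE; split.
    exact: mulr_ge0.
  by rewrite addr_ge0 // mulr_ge0.
- by move=> i Pi; rewrite derivXsubC hornerXsubC hornerC subr_ge0 ha.
Qed.

Lemma sign_prod (y : nat -> R) (N i : nat) : (i < N)%N ->
  (forall j k, (j < k)%N -> (k < N)%N -> y k < y j) ->
  0 < (-1) ^+ i * \prod_(0 <= j < N | j != i) (y i - y j).
Proof.
move=> iN dec.
rewrite (@big_cat_nat _ _ _ i 0 N) /= ?(ltnW iN) //.
have -> : \prod_(0 <= j < i | j != i) (y i - y j) = \prod_(0 <= j < i) (y i - y j).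
  rewrite big_nat_cond [RHS]big_nat_cond; apply: eq_bigl => j.
  apply/idP/idP; lia.
have -> : (-1) ^+ i = \prod_(0 <= j < i) (-1 : R) by rewrite prodr_const_nat subn0.
rewrite mulrA -big_split /=; apply: mulr_gt0.
  rewrite big_nat_cond; apply: prodr_gt0 => j /andP[/andP[_ ji] _].
  rewrite mulN1r opprB subr_gt0; apply: dec => //.
rewrite big_nat_cond; apply: prodr_gt0 => j /andP[/andP[ij jN] ji].
rewrite subr_gt0; apply: dec => //; lia.
Qed.

Lemma markov_end (d : nat) (p : {poly R}) (M : R) :
  (size p <= d.+1)%N -> (forall t, -1 <= t <= 1 -> `|p.[t]| <= M) ->
  `|p^`().[1]| <= d%:R ^+ 2 * M.
Proof.
case: d => [|d] sp hM.
  by rewrite (size1_polyC sp) derivC horner0 normr0 mulr0n expr0n /= mul0r.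
set D := d.+1; set N := D.+1.
have D0 : (0 < D)%N by [].
have N0 : (0 < N)%N by [].
pose x := node D.
have xinj : injective x := @node_inj D D0.
pose Ln (i : 'I_N) : {poly R} := tnth (N.-lagrange x) i.
have key (q : {poly R}) : (size q <= N)%N ->
    q^`().[1] = \sum_(i < N) q.[x i] * (Ln i)^`().[1].
  move=> sq; rewrite {1}(lagrange_gen N0 xinj sq) raddf_sum horner_sum.
  by apply: eq_bigr => i _; rewrite /= deriv_mulC hornerM hornerC.
have xle (j : 'I_N) : -1 <= x j <= 1 by apply: node_le; rewrite -ltnS.
have sgn (i : 'I_N) : 0 <= (-1) ^+ i * (Ln i)^`().[1].
  rewrite /Ln lagrangeE //= deriv_mulC hornerM hornerC.
  set P := \prod_(_ < _ | _) _.
  have [_ h1] := @prod_XsubC_at1 _ (index_enum 'I_N) (fun j => j != i) (fun j => x j)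
     (fun j _ => (andP (xle j)).2).
  have h2 : 0 < (-1) ^+ i * P.[x i].
    rewrite /P horner_prod.
    under eq_bigr do rewrite hornerXsubC.
    rewrite (eq_bigl (fun j : 'I_N => (j : nat) != i)) //.
    rewrite -(big_mkord (fun j => j != i) (fun j => x i - x j)).
    apply: sign_prod => // j k jk kN; apply: node_dec => //; by rewrite -ltnS.
  have Pn0 : P.[x i] != 0.
    by apply/eqP => e; move: h2; rewrite e mulr0 ltxx.
  have -> : (-1) ^+ i * (P.[x i]^-1 * P^`().[1]) =
            ((-1) ^+ i * P.[x i]) * (P.[x i]^-1) ^+ 2 * P^`().[1].
    by field.
  apply: mulr_ge0 => //; apply: mulr_ge0; [exact: ltW | exact: sqr_ge0].
rewrite (key p sp).
apply: le_trans (ler_norm_sum _ _ _) _.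
apply: (@le_trans _ _ (\sum_(i < N) M * ((-1) ^+ i * (Ln i)^`().[1]))).
  apply: ler_sum => i _; rewrite normrM.
  have -> : `|(Ln i)^`().[1]| = (-1) ^+ i * (Ln i)^`().[1].
    by rewrite -(ger0_norm (sgn i)) normrM normrX normrN1 expr1n mul1r.
  apply: ler_wpM2r; [exact: sgn | exact: hM].
have e : (cheb D)^`().[1] = \sum_(i < N) (-1) ^+ i * (Ln i)^`().[1].
  rewrite key ?size_cheb //; apply: eq_bigr => i _; rewrite cheb_node //.
  by rewrite -ltnS.
by rewrite -mulr_sumr -e (cheb_at1 D).2 mulrC.
Qed.


Lemma markov_seg (d : nat) (p : {poly R}) (M c h : R) :
  (size p <= d.+1)%N -> (forall t, 0 <= t <= 1 -> `|p.[c - t * h]| <= M) ->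
  `|p^`().[c]| * `|h| <= 2 * (d%:R ^+ 2 * M).
Proof.
move=> sp hM.
pose q : {poly R} := (c - h / 2)%:P + (h / 2)%:P * 'X.
have qt t : q.[t] = c - ((1 - t) / 2) * h by rewrite /q !hornerE; field.
have sq : (size q <= 2)%N.
  apply: (leq_trans (size_polyD _ _)); rewrite geq_max.
  apply/andP; split; first by apply: (leq_trans (size_polyC_leq1 _)).
  apply: (leq_trans (size_polyMleq _ _)); rewrite size_polyX.
  have := size_polyC_leq1 (h / 2); move: (size _) => m; lia.
have sP : (size (p \Po q) <= d.+1)%N.
  apply: (leq_trans (size_comp_poly_leq _ _)).
  move: sp sq; move: (size p) (size q) => a b; nia.
have hP t : -1 <= t <= 1 -> `|(p \Po q).[t]| <= M.
  move=> /andP [t1 t2]; rewrite horner_comp qt; apply: hM.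
  apply/andP; split; lra.
have := @markov_end d _ M sP hP.
rewrite deriv_comp hornerM horner_comp qt.
have -> : q^`() = (h / 2)%:P by rewrite /q !derivE add0r mulr1.
rewrite hornerC.
have -> : c - (1 - 1) / 2 * h = c by rewrite subrr mul0r mul0r subr0.
rewrite normrM (normrM h) (ger0_norm (x := 2^-1)) ?invr_ge0 ?ler0n //.
move=> H; have : `|p^`().[c]| * `|h| / 2 <= d%:R ^+ 2 * M by rewrite mulrA in H.
lra.
Qed.

End Markov.
Local Open Scope classical_set_scope.

Section Restr.
Variables (R : realType) (n : nat).

Definition restr (f : {mpoly R[n]}) (s w : 'I_n -> R) : {poly R} :=
  \sum_(m <- msupp f) f@_m *: \prod_(i < n) ((s i)%:P + (w i)%:P * 'X) ^+ m i.

Lemma restr_ev f s w t :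
  (restr f s w).[t] = meval (fun i => s i + w i * t) f.
Proof.
rewrite /restr mevalE horner_sum; apply: eq_bigr => m _.
rewrite hornerZ horner_prod; congr (_ * _); apply: eq_bigr => i _.
by rewrite horner_exp !hornerE.
Qed.

Lemma size_lin_exp (a b : R) k : (size (((a%:P + b%:P * 'X) ^+ k)%R : {poly R}) <= k.+1)%N.
Proof.
have s1 : (size ((a%:P + b%:P * 'X)%R : {poly R}) <= 2)%N.
  apply: (leq_trans (size_polyD _ _)); rewrite geq_max.
  apply/andP; split; first by apply: (leq_trans (size_polyC_leq1 _)).
  apply: (leq_trans (size_polyMleq _ _)); rewrite size_polyX.
  have := size_polyC_leq1 b; move: (size _) => m; lia.
elim: k => [|k IH]; first by rewrite expr0 size_poly1.
rewrite exprS; apply: (leq_trans (size_polyMleq _ _)).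
move: s1 IH; move: (size _) (size _) => u v; lia.
Qed.

Lemma size_restr f s w : (size (restr f s w) <= (tdeg f).+1)%N.
Proof.
rewrite /restr; apply: (leq_trans (size_sum _ _ _)).
apply/bigmax_leqP_seq => m mf _.
apply: (leq_trans (size_scale_leq _ _)).
have : (size (\prod_(i < n) ((s i)%:P + (w i)%:P * 'X) ^+ m i)%R <= (mdeg m).+1)%N.
  rewrite mdegE.
  apply: (big_ind2 (fun (P : {poly R}) (k : nat) => (size P <= k.+1)%N)).
  - by rewrite size_poly1.
  - move=> P1 k1 P2 k2 h1 h2; apply: (leq_trans (size_polyMleq _ _)).
    move: h1 h2; move: (size P1) (size P2) => u v; lia.
  - by move=> i _; apply: size_lin_exp.
move=> h; apply: (leq_trans h); rewrite ltnS /tdeg.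
by apply: (leq_bigmax_seq (F := fun m => mdeg m)).
Qed.

End Restr.
Local Open Scope classical_set_scope.

Lemma L2a (R : realType) (A B p q : R) : 0 <= A -> 0 <= B -> 0 <= p -> 0 <= q ->
  A^+2 + B^+2 <= 1 -> p^+2 + q^+2 <= 1 -> 1 < A + p/2 -> 1 < B + q/4 -> False.
Proof.
move=> A0 B0 p0 q0 hs hu h1 h2.
have p1 : p <= 1 by nra.
have q1 : q <= 1 by nra.
have hA : (1 - p/2)^+2 < A^+2 by nra.
have hB : (1 - q/4)^+2 < B^+2 by nra.
nra.
Qed.

Lemma L2 (R : realType) (s1 s2 u1 u2 : R) :
  s1^+2 + s2^+2 <= 1 -> u1^+2 + u2^+2 <= 1 ->
  1 < `|s1| + `|u1|/2 -> 1 < `|s2| + `|u2|/4 -> False.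
Proof.
move=> hs hu h1 h2.
apply: (@L2a R `|s1| `|s2| `|u1| `|u2|) => //.
- by rewrite !real_normK ?num_real.
- by rewrite !real_normK ?num_real.
Qed.

Lemma L1 (R : realType) (s u : R) : s^+2 <= 1 -> u^+2 <= 1 ->
  1 < `|s - u/2| -> 1 < `|s + u/2| -> False.
Proof.
move=> hs hu.
have /andP[s1 s2] : -1 <= s <= 1 by apply/andP; split; nra.
have /andP[u1 u2] : -1 <= u <= 1 by apply/andP; split; nra.
case: (ger0P (s - u/2)) => h1 H1; case: (ger0P (s + u/2)) => h2 H2; lra.
Qed.

Section Geom.
Variables (R : realType) (n : nat).
Implicit Types (s w y : 'I_n -> R).

Lemma sum1_le (F : 'I_n -> R) i : (forall j, 0 <= F j) -> F i <= \sum_j F j.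
Proof. by move=> F0; rewrite (bigD1 i) //= lerDl sumr_ge0. Qed.

Lemma sum2_le (F : 'I_n -> R) i k : (forall j, 0 <= F j) -> i != k ->
  F i + F k <= \sum_j F j.
Proof.
move=> F0 ik; rewrite (bigD1 i) //= (bigD1 k) /=; last by rewrite eq_sym.
by rewrite addrA lerDl sumr_ge0.
Qed.

Lemma not_cube y : ~ (@cube R n y) -> exists i, 1 < `|y i|.
Proof.
move=> /existsNP [i hi]; exists i; rewrite ltNge ler_norml; exact/negP.
Qed.

Lemma geom s w (L : R) : 0 < L -> \sum_i w i ^+ 2 = L ^+ 2 ->
  \sum_i s i ^+ 2 <= 1 -> @cube R n (fun i => s i + w i) ->
  exists a b : R, [/\ 0 <= a, 1 <= b, 1 <= 2 * L * (a + b),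
    @cube R n (fun i => s i - a * w i) & @cube R n (fun i => s i + b * w i)].
Proof.
move=> L0 hw hs hx.
have Ln0 : L != 0 by rewrite gt_eqF.
pose u i := w i / L.
have wu i : w i = L * u i by rewrite /u mulrC divfK.
have hu : \sum_i u i ^+ 2 = 1.
  have : \sum_i w i ^+ 2 = L ^+ 2 * \sum_i u i ^+ 2.
    by rewrite mulr_sumr; apply: eq_bigr => i _; rewrite wu exprMn.
  rewrite hw => /eqP; rewrite -subr_eq0 -{1}(mulr1 (L ^+ 2)) -mulrBr mulf_eq0.
  by rewrite expf_eq0 /= (negbTE Ln0) /= subr_eq0 => /eqP <-.
have sq0 (F : 'I_n -> R) j : 0 <= F j ^+ 2 by apply: sqr_ge0.
have s1 i : s i ^+ 2 <= 1 by apply: le_trans hs; apply: (sum1_le (fun j => s j ^+ 2)).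
have u1 i : u i ^+ 2 <= 1 by rewrite -hu; apply: (sum1_le (fun j => u j ^+ 2)).
have s2 i k : i != k -> s i ^+ 2 + s k ^+ 2 <= 1.
  by move=> ik; apply: le_trans hs; apply: (sum2_le (fun j => s j ^+ 2)).
have u2 i k : i != k -> u i ^+ 2 + u k ^+ 2 <= 1.
  by move=> ik; rewrite -hu; apply: (sum2_le (fun j => u j ^+ 2)).
have cubemax c : cube (fun i => s i + c * w i) ->
    cube (fun i => s i + Num.max 1 c * w i).
  move=> hc; case: (leP 1 c) => _ //.
  by move=> i; rewrite mul1r; apply: hx.
pose c2 := (2 * L)^-1.
have c2w i : c2 * w i = u i / 2 by rewrite /c2 wu; field.
have hc2 : 2 * L * c2 = 1 by rewrite /c2 mulfV // mulf_neq0 // pnatr_eq0.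
have c20 : 0 <= c2 by rewrite invr_ge0; lra.
have [hA|nA] := pselect (cube (fun i => s i - c2 * w i)).
  exists c2, 1; split => //; first by rewrite mulrDr hc2; lra.
  by move=> i; rewrite mul1r; apply: hx.
have [hB|nB] := pselect (cube (fun i => s i + c2 * w i)).
  exists 0, (Num.max 1 c2); split => //.
  - by rewrite le_max lexx.
  - have hm : c2 <= Num.max 1 c2 by rewrite le_max lexx orbT.
    rewrite add0r; nra.
  - move=> i; rewrite mul0r subr0; have := s1 i => h; apply/andP; split; nra.
  - exact: cubemax.
have [i hi] := @not_cube _ nA.
have [j hj] := @not_cube _ nB.
rewrite /= c2w in hi; rewrite /= c2w in hj.
have ij : i != j.
  by apply/eqP => e; subst j; exact: (@L1 R (s i) (u i) (s1 i) (u1 i) hi hj).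
pose c4 := (4 * L)^-1.
have c4w i0 : c4 * w i0 = u i0 / 4 by rewrite /c4 wu; field.
have hc4 : 4 * L * c4 = 1 by rewrite /c4 mulfV // mulf_neq0 // pnatr_eq0.
have c40 : 0 <= c4 by rewrite invr_ge0; lra.
have good k (e : R) : `|e| = 1 -> -1 <= s k + e * (c4 * w k) <= 1.
  move=> e1; rewrite -ler_norml c4w; rewrite leNgt; apply/negP => hk.
  have hk' : 1 < `|s k| + `|u k| / 4.
    apply: (lt_le_trans hk); apply: (le_trans (ler_normD _ _)).
    by rewrite normrM e1 mul1r normrM (ger0_norm (x := 4^-1)) ?invr_ge0 ?ler0n.
  have hi' : 1 < `|s i| + `|u i| / 2.
    apply: (lt_le_trans hi); apply: (le_trans (ler_normB _ _)).
    by rewrite normrM (ger0_norm (x := 2^-1)) ?invr_ge0 ?ler0n.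
  have hj' : 1 < `|s j| + `|u j| / 2.
    apply: (lt_le_trans hj); apply: (le_trans (ler_normD _ _)).
    by rewrite normrM (ger0_norm (x := 2^-1)) ?invr_ge0 ?ler0n.
  case: (eqVneq i k) => [ik|ik].
    subst k; have jk : j != i by rewrite eq_sym.
    exact: (@L2 R _ _ _ _ (s2 _ _ jk) (u2 _ _ jk) hj' hk').
  exact: (@L2 R _ _ _ _ (s2 _ _ ik) (u2 _ _ ik) hi' hk').
exists c4, (Num.max 1 c4); split.
- by [].
- by rewrite le_max lexx.
- have hm : c4 <= Num.max 1 c4 by rewrite le_max lexx orbT.
  nra.
- move=> k; have := good k (-1) (normrN1 _); by rewrite mulN1r.
- apply: cubemax => k; have := good k 1 (normr1 _); by rewrite mul1r.
Qed.

End Geom.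
Local Open Scope classical_set_scope.

Section Lip.
Variables (R : realType) (n : nat).

Lemma seg_cube (s w : 'I_n -> R) (a b t : R) : 0 <= a -> 1 <= b ->
  @cube R n (fun i => s i - a * w i) -> @cube R n (fun i => s i + b * w i) ->
  -a <= t <= b -> @cube R n (fun i => s i + w i * t).
Proof.
move=> a0 b1 hA hB /andP[t1 t2] i.
have /andP[A1 A2] := hA i; have /andP[B1 B2] := hB i.
have e1 : 0 <= (b - t) * (s i - a * w i + 1) by apply: mulr_ge0; lra.
have e2 : 0 <= (t + a) * (s i + b * w i + 1) by apply: mulr_ge0; lra.
have e3 : 0 <= (b - t) * (1 - (s i - a * w i)) by apply: mulr_ge0; lra.
have e4 : 0 <= (t + a) * (1 - (s i + b * w i)) by apply: mulr_ge0; lra.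
apply/andP; split; nra.
Qed.

Lemma lip (f : {mpoly R[n]}) (s x : 'I_n -> R) (M : R) :
  (forall y, @cube R n y -> `|meval y f| <= M) -> \sum_i s i ^+ 2 <= 1 ->
  @cube R n x ->
  `|meval x f - meval s f| <= 8 * (tdeg f)%:R ^+ 2 * M * edist x s.
Proof.
move=> hM hs hx.
have M0 : 0 <= M by apply: le_trans (hM x hx).
pose w i := x i - s i.
set L := edist x s.
have sw0 : 0 <= \sum_i w i ^+ 2 by apply: sumr_ge0 => i _; apply: sqr_ge0.
have hL : \sum_i w i ^+ 2 = L ^+ 2 by rewrite /L /edist sqr_sqrtr.
have L0 : 0 <= L by apply: sqrtr_ge0.
case: (eqVneq L 0) => [L00|Ln0].
  have e : x =1 s.
    move=> i; have := psumr_eq0P (P := predT) (fun i _ => sqr_ge0 (w i)).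
    rewrite hL L00 expr0n /= => /(_ erefl i erefl) /eqP.
    by rewrite sqrf_eq0 subr_eq0 => /eqP.
  rewrite (meval_eq f e) subrr normr0 L00 mulr0 //.
have Lp : 0 < L by rewrite lt0r Ln0.
have hx' : @cube R n (fun i => s i + w i).
  by move=> i; rewrite /w addrC subrK; apply: hx.
have [a [b [a0 b1 hab hA hB]]] := @geom R n s w L Lp hL hs hx'.
pose q := @restr R n f s w.
have hq t : -a <= t <= b -> `|q.[t]| <= M.
  by move=> ht; rewrite restr_ev; apply: hM; exact: (@seg_cube s w a b t a0 b1 hA hB ht).
have q1 : q.[1] = meval x f.
  by rewrite restr_ev; apply: meval_eq => i; rewrite mulr1 /w addrC subrK.
have q0 : q.[0] = meval s f.
  by rewrite restr_ev; apply: meval_eq => i; rewrite mulr0 addr0.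
have [c] := poly_mvt q (@ltr01 R).
rewrite in_itv /= => /andP[c0 c1].
rewrite q1 q0 subr0 mulr1 => ->.
set D := tdeg f.
have sq : (size q <= D.+1)%N by apply: size_restr.
set K := D%:R ^+ 2 * M.
have K0 : 0 <= K by rewrite mulr_ge0 // sqr_ge0.
have [h [hh1 hh2]] : exists h : R, `|q^`().[c]| * `|h| <= 2 * K /\ 1 <= 4 * L * `|h|.
  case: (lerP (b - c) (c + a)) => hbc.
    exists (c + a); split.
      apply: (@markov_seg R D q M c (c + a) sq) => t /andP[t0 t1]; apply: hq; apply/andP; split; nra.
    rewrite ger0_norm; last by lra.
    nra.
  exists (- (b - c)); split.
    apply: (@markov_seg R D q M c (- (b - c)) sq) => t /andP[t0 t1]; apply: hq; apply/andP; split; nra.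
  rewrite normrN ger0_norm; last by lra.
  nra.
set Q := `|q^`().[c]|.
have Q0 : 0 <= Q by apply: normr_ge0.
have H0 : 0 <= `|h| by apply: normr_ge0.
have -> : 8 * D%:R ^+ 2 * M * L = 8 * K * L by rewrite /K; ring.
rewrite -/Q.
have e1 : Q <= Q * (4 * L * `|h|) by rewrite ler_peMr.
have e2 := ler_wpM2l L0 hh1.
have e3 : Q * (4 * L * `|h|) = 4 * (L * (Q * `|h|)) by ring.
apply: (le_trans e1); rewrite e3.
have -> : 8 * K * L = 4 * (L * (2 * K)) by ring.
by rewrite ler_pM2l.
Qed.

End Lip.
Local Open Scope classical_set_scope.

Section Main.
Variables (R : realType) (n : nat).

Lemma meval_sos (p : {mpoly R[n]}) v : sos p -> 0 <= meval v p.
Proof.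
case=> l ->; rewrite (big_morph (meval v) (mevalD v) (meval0 v)).
by apply: sumr_ge0 => q _; rewrite expr2 mevalM -expr2 sqr_ge0.
Qed.

Lemma ballS (r : nat) (g : 'I_r -> {mpoly R[n]}) (s : 'I_n -> R) :
  quadmod g one_minus_sqnorm -> semialg g s -> \sum_i s i ^+ 2 <= 1.
Proof.
move=> [s0 [sg [hs0 [hsg he]]]] hs.
have := congr1 (meval s) he.
rewrite /one_minus_sqnorm mevalB meval1 (big_morph (meval s) (mevalD s) (meval0 s)).
rewrite mevalD (big_morph (meval s) (mevalD s) (meval0 s)).
have -> : \sum_(i < n) meval s (mpolyX R (mnm1 i) ^+ 2) = \sum_i s i ^+ 2.
  by apply: eq_bigr => i _; rewrite expr2 mevalM mevalXU -expr2.
move=> e; rewrite -subr_ge0 e; apply: addr_ge0; first exact: meval_sos.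
apply: sumr_ge0 => i _; rewrite mevalM; apply: mulr_ge0; first exact: meval_sos.
exact: hs.
Qed.

Lemma ball_cube (s : 'I_n -> R) : \sum_i s i ^+ 2 <= 1 -> @cube R n s.
Proof.
move=> hs i; have : s i ^+ 2 <= 1.
  apply: le_trans hs; apply: (@sum1_le R n (fun j => s j ^+ 2)) => j; exact: sqr_ge0.
move=> h; apply/andP; split; nra.
Qed.

Lemma f_bound (f : {mpoly R[n]}) : exists B, forall y, @cube R n y -> `|meval y f| <= B.
Proof.
exists (\sum_(m <- msupp f) `|f@_m|) => y cy.
rewrite mevalE; apply: le_trans (ler_norm_sum _ _ _) _.
apply: ler_sum => m _; rewrite normrM; apply: ler_piMr => //.
rewrite normr_prod; apply: prodr_ile1 => i _; rewrite normrX.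
have : `|y i| <= 1 by rewrite ler_norml; apply: cy.
move=> h; apply/andP; split; first by rewrite exprn_ge0.
by rewrite exprn_ile1.
Qed.

Lemma sqrt_le (z : R) : 0 <= z -> Num.sqrt z <= z + 1.
Proof.
move=> z0; have r0 := sqrtr_ge0 z; have r2 := sqr_sqrtr z0.
set r := Num.sqrt z in r0 r2 *; rewrite -r2; nra.
Qed.

End Main.

Theorem mainTheorem7 (R : realType) (n r : nat) (g : 'I_r -> @poly_n R n)
    (f : @poly_n R n) :
  quadmod g one_minus_sqnorm ->
  (forall i, supnorm (g i) <= 2^-1) ->
  semialg g !=set0 ->
  0 < fmin f (semialg g) ->
  (exists x, cube x /\ ~ semialg g x /\ ev f x <= 0) ->
  let A := [set x | cube x /\ ev f x <= 3 / 4 * fmin f (semialg g)] in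
  eps f (semialg g) / (8 * (tdeg f)%:R ^+ 2) <= hausdorff A (semialg g).
Proof.
move=> hQ _ hS hf [x0 [cx0 [nSx0 fx0]]]; cbv zeta.
set A := [set x | cube x /\ ev f x <= 3 / 4 * fmin f (semialg g)].
set S := semialg g.
set M := supnorm f.
set fm := fmin f S.
set d := tdeg f.
have cubeS s : S s -> cube s by move=> hs; apply: ball_cube; apply: ballS hQ hs.
have [B hB] := @f_bound R n f.
have hsupF : has_sup [set `|ev f x| | x in cube].
  split; first by exists `|ev f x0|; exists x0.
  by exists B => _ [y cy <-]; apply: hB.
have fM y : cube y -> `|meval y f| <= M.
  by move=> cy; apply: (sup_upper_bound hsupF); exists y.
have hinfF : has_lbound [set ev f x | x in S].
  exists (- B) => _ [y sy <-]; have := hB y (cubeS y sy).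
  rewrite /ev ler_norml => /andP[] //.
have fmin_le s : S s -> fm <= ev f s.
  by move=> hs; apply: (ge_inf hinfF); exists s.
have key s : S s -> fm <= 8 * d%:R ^+ 2 * M * edist x0 s.
  move=> hs; have hl := @lip R n f s x0 M fM (@ballS R n r g s hQ hs) cx0.
  have := fmin_le s hs; rewrite /ev in fx0 *.
  move: hl; set a := meval x0 f; set b := meval s f => hl hb.
  apply: (le_trans _ hl); rewrite distrC.
  apply: (le_trans _ (ler_norm _)); lra.
have [s0 hs0] := hS.
have Mpos : 0 < M.
  apply: (lt_le_trans hf); apply: (le_trans (fmin_le s0 hs0)).
  apply: (le_trans (ler_norm _)); apply: fM; exact: cubeS.
have dpos : 0 < 8 * d%:R ^+ 2 :> R.
  rewrite mulr_gt0 // exprn_gt0 // ltr0n lt0n; apply/negP => /eqP d0.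
  have := key s0 hs0; rewrite d0 expr0n /= mulr0 !mul0r; lra.
have tle s : S s -> eps f S / (8 * d%:R ^+ 2) <= edist x0 s.
  move=> hs; rewrite /eps -/fm -/M ler_pdivrMr // ler_pdivrMr //.
  have -> : edist x0 s * (8 * d%:R ^+ 2) * M = 8 * d%:R ^+ 2 * M * edist x0 s by ring.
  exact: key.
have hdist : eps f S / (8 * d%:R ^+ 2) <= dist_set x0 S.
  apply: lb_le_inf; first by exists (edist x0 s0); exists s0.
  by move=> _ [s hs <-]; apply: tle.
have x0A : A x0.
  split => //; apply: (le_trans fx0); rewrite mulr_ge0 //; last exact: ltW.
  by rewrite divr_ge0.
have edist_ub (a b : 'I_n -> R) : cube a -> cube b -> edist a b <= (4 : R) *+ n + 1.
  move=> ca cb; rewrite /edist; apply: (le_trans (@sqrt_le R _ _)); first by apply: sumr_ge0 => i _; apply: sqr_ge0.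
  rewrite lerD2r; apply: (@le_trans _ _ (\sum_(i < n) (4 : R))).
    apply: ler_sum => i _; have /andP[a1 a2] := ca i; have /andP[b1 b2] := cb i; nra.
  by rewrite sumr_const card_ord.
have hsup1 : has_sup [set dist_set a S | a in A].
  split; first by exists (dist_set x0 S); exists x0.
  exists ((4 : R) *+ n + 1) => _ [a [ca _] <-].
  apply: le_trans (edist_ub a s0 ca (cubeS s0 hs0)).
  have hlb : has_lbound [set edist a b | b in S].
    by exists 0 => _ [s _ <-]; apply: sqrtr_ge0.
  by apply: (ge_inf hlb); exists s0.
rewrite /hausdorff le_max; apply/orP; left.
apply: (le_trans hdist); apply: (sup_upper_bound hsup1); exists x0 => //.
Qed.
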